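(* Let $\omega>0$ and, for $\tau>0$, set $\sigma=\omega\sqrt\tau$. Let $w:\mathbb{R}\to\mathbb{R}$ be continuous with $0<L\le w(x)\le U$ for all $x\in\mathbb{R}$ for some constants $L,U$, and let $w$ be twice differentiable on $\mathbb{R}$ with $|w''(x)|<M$ for some $M$ and all $x\in\mathbb{R}$. Define, for $x_1,x_2\in\mathbb{R}$ and $\tau>0$, $$v(x_1,x_2;\tau)=\frac{\int_{\mathbb{R}}k_{\sqrt2\sigma}(y;x_2)\,w(y)\,\mathrm{d}y}{\int_{\mathbb{R}}k_{\sigma}(y;x_2)\,w(y)\,\mathrm{d}y}\int_{\mathbb{R}}k_{\sigma/\sqrt2}\Bigl(z;\tfrac12(x_1+x_2)\Bigr)\frac{w(z)}{\int_{\mathbb{R}}k_\sigma(y;z)\,w(y)\,\mathrm{d}y}\,\mathrm{d}z,$$ where $k_s(\cdot;x)$ denotes the Gaussian density with mean $x$ and standard deviation $s$. Let $\tau_0=\frac{2L}{M\omega^2}$. Then there is a constant $C>0$ such that $|v(x_1,x_2;\tau)-1|\le C\tau$ for all $x_1,x_2\in\mathbb{R}$ and all $\tau\in(0,\tau_0)$.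
   Context: The function $v$ is the ratio of the two-step transition density of a one-dimensional random walk with Gaussian kernel of standard deviation $\sigma$ and weighting function $w$ to the one-step density of the same model with standard deviation $\sqrt2\sigma$. *)

(* Defs.v *)
From HB Require Import structures.
From mathcomp Require Import all_boot all_order all_algebra.
From mathcomp Require Import all_classical all_reals all_analysis.
Set Implicit Arguments. Unset Strict Implicit. Unset Printing Implicit Defensive.
Import Order.TTheory GRing.Theory Num.Theory.
Import numFieldNormedType.Exports.
Local Open Scope classical_set_scope.
Local Open Scope ring_scope.

Definition gk {R : realType} (s x y : R) : R := normal_pdf x s y.

Definition kint {R : realType} (w : R -> R) (s x : R) : R :=
  Rintegral (@lebesgue_measure R) setT (fun y => gk s x y * w y).

Definition vfun {R : realType} (w : R -> R) (sigma x1 x2 : R) : R :=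
  kint w (Num.sqrt 2 * sigma) x2 / kint w sigma x2 *
  Rintegral (@lebesgue_measure R) setT
    (fun z => gk (sigma / Num.sqrt 2) ((x1 + x2) / 2) z * (w z / kint w sigma z)).

(* Main.v *)
Require Import Defs.
From HB Require Import structures.
From mathcomp Require Import all_boot all_order all_algebra.
From mathcomp Require Import all_classical all_reals all_analysis.
From mathcomp Require Import ring lra measurable_realfun.
Import Order.TTheory GRing.Theory Num.Theory.
Import numFieldNormedType.Exports.
Local Open Scope classical_set_scope.
Local Open Scope ring_scope.


Section Taylor.
Context {R : realType}.

Lemma lip_seg (f df : R -> R) (K a b : R) : a <= b ->
  (forall x : R, is_derive x 1 f (df x)) ->
  (forall c, a <= c <= b -> `|df c| <= K) ->
  `|f b - f a| <= K * (b - a).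
Proof.
move=> ab dfd dK.
have [c cab ->] := @MVT_segment R f df a b ab (fun x _ => dfd x)
  (continuous_subspaceT (fun x => differentiable_continuous
     (proj1 (derivable1_diffP f x) (@ex_derive _ _ _ _ _ _ _ (dfd x))))).
have ab0 : 0 <= b - a by rewrite subr_ge0.
rewrite normrM (ger0_norm ab0) ler_wpM2r //.
by apply: dK; rewrite in_itv /= in cab.
Qed.


Lemma taylor2 (w : R -> R) (M x y : R) :
  (forall x, derivable w x 1) ->
  (forall x, derivable (derive1 w) x 1) ->
  (forall x, `|derive1n 2 w x| < M) ->
  `|w y - w x - derive1 w x * (y - x)| <= M * (y - x) ^+ 2.
Proof.
move=> dw dw' bM.
have M0 : 0 <= M by apply: le_trans (ltW (bM 0)).
have d2 : forall c : R, is_derive c 1 (derive1 w) (derive1n 2 w c).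
  by move=> c; rewrite /derive1n /= derive1E; exact: derivableP.
have d1 : forall c : R, is_derive c 1 (w - derive1 w x \*: id)
    ('D_1 w c - derive1 w x *: 1).
  move=> c; apply: is_deriveB; first exact: derivableP.
have hE : forall a b, (w - derive1 w x \*: id) b - (w - derive1 w x \*: id) a
    = w b - w a - derive1 w x * (b - a).
  by move=> a b; rewrite !fctE /= /GRing.scale /=; ring.
have [xy|yx] := leP x y.
  have := @lip_seg _ _ (M * (y - x)) x y xy d1.
  rewrite hE expr2 mulrA; apply => c /andP[xc cy].
  rewrite -derive1E /GRing.scale /= mulr1.
  apply: le_trans (@lip_seg _ _ M x c xc d2 _) _.
    by move=> e _; exact: ltW.
  by rewrite ler_wpM2l // lerB.
have yx' := ltW yx.
have := @lip_seg _ _ (M * (x - y)) y x yx' d1.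
rewrite hE -normrN.
have -> : - (w x - w y - derive1 w x * (x - y)) = w y - w x - derive1 w x * (y - x).
  by ring.
have -> : M * (x - y) * (x - y) = M * (y - x) ^+ 2 by rewrite expr2; ring.
apply => c /andP[yc cx].
rewrite -derive1E /GRing.scale /= mulr1 distrC.
apply: le_trans (@lip_seg _ _ M c x cx d2 _) _.
  by move=> e _; exact: ltW.
by rewrite ler_wpM2l // lerB.
Qed.

End Taylor.



Section Gauss.
Context {R : realType}.
Local Notation mu := (@lebesgue_measure R).

Lemma gkE (s x y : R) : 0 < s ->
  gk s x y = normal_peak s * expR (- (y - x) ^+ 2 / (s ^+ 2 *+ 2)).
Proof. by move=> s0; rewrite /gk normal_pdfE ?gt_eqF. Qed.

Lemma peak2 (s : R) : 0 < s -> normal_peak s = 2 * normal_peak (2 * s).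
Proof.
move=> s0; rewrite /normal_peak.
have -> : (2 * s) ^+ 2 * pi *+ 2 = 2 ^+ 2 * (s ^+ 2 * pi *+ 2).
  by ring.
rewrite sqrtrM ?sqr_ge0 // sqrtr_sqr ger0_norm // invfM mulrA divff ?mul1r //.
Qed.

Lemma moment2_pt (s x y : R) : 0 < s ->
  (y - x) ^+ 2 * gk s x y <= 16 * s ^+ 2 * gk (2 * s) x y.
Proof.
move=> s0; have s20 : 0 < 2 * s by rewrite mulr_gt0.
rewrite !gkE // (peak2 _ s0).
set p := normal_peak (2 * s).
have p0 : 0 <= p by exact: normal_peak_ge0.
set t := y - x.
have ss : 0 < s ^+ 2 by rewrite exprn_gt0.
set q := t ^+ 2 / (8 * s ^+ 2).
have q0 : 0 <= q by rewrite divr_ge0 ?sqr_ge0 // mulr_ge0 // ltW.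
have E1 : - t ^+ 2 / (s ^+ 2 *+ 2) = - q + - (3 * q).
  rewrite /q; field; rewrite gt_eqF //.
have E2 : - t ^+ 2 / ((2 * s) ^+ 2 *+ 2) = - q.
  rewrite /q; field; rewrite gt_eqF //.
have E3 : t ^+ 2 = 8 * s ^+ 2 * q by rewrite /q; field; rewrite gt_eqF.
rewrite E1 E2 expRD E3.
have key : q * expR (- (3 * q)) <= 1.
  rewrite expRN ler_pdivrMr ?expR_gt0 // mul1r.
  apply: le_trans (expR_ge1Dx _); lra.
have e0 : 0 <= expR (- q) by exact: expR_ge0.
have := ler_wpM2l (mulr_ge0 (mulr_ge0 (ler0n _ 16) (ltW ss)) (mulr_ge0 p0 e0)) key.
rewrite mulr1 => H; apply: le_trans H; rewrite le_eqVlt; apply/orP; left; apply/eqP; ring.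
Qed.


Lemma gk_meas (s x : R) : measurable_fun setT (gk s x).
Proof. exact: measurable_normal_pdf. Qed.

Lemma gk_integrable (s x : R) : mu.-integrable setT (EFin \o gk s x).
Proof. exact: integrable_normal_pdf. Qed.

Lemma gk_int1 (s x : R) : Rintegral mu setT (gk s x) = 1.
Proof. by have := integral_normal_pdf x s; rewrite /Rintegral /gk => ->. Qed.

Lemma gk_ge0 (s x y : R) : 0 <= gk s x y.
Proof. exact: normal_pdf_ge0. Qed.

Lemma int_dom (s x a b : R) (h : R -> R) : 0 < s -> 0 <= b ->
  measurable_fun setT h -> (forall y, `|h y| <= a + b * (y - x) ^+ 2) ->
  mu.-integrable setT (EFin \o (fun y => gk s x y * h y)).
Proof.
move=> s0 b0 mh hb.
apply: (le_integrable _ _ _ (integrableD _ (integrableZl _ a (gk_integrable s x))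
   (integrableZl _ (16 * b * s ^+ 2) (gk_integrable (2 * s) x)))) => //.
  by apply/measurable_EFinP; apply: measurable_funM => //; exact: gk_meas.
move=> y _; rewrite /comp /= lee_fin.
apply: le_trans (ler_norm _).
rewrite normrM (ger0_norm (gk_ge0 _ _ _)).
apply: le_trans (ler_wpM2l (gk_ge0 s x y) (hb y)) _.
have := (moment2_pt s x y s0); have := gk_ge0 s x y.
move: (gk s x y) (gk (2 * s) x y) ((y - x) ^+ 2) => g g2 t g0 H.
have H2 := ler_wpM2l b0 H.
nra.
Qed.

End Gauss.



Section Half.
Context {R : realType}.
Local Notation mu := (@lebesgue_measure R).

Lemma half_moment (s c : R) : 0 < s ->
  (\int[mu]_(y in `[c, +oo[) ((gk s c y * (y - c))%:E) =
   (s ^+ 2 * normal_peak s)%:E)%E.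
Proof.
move=> s0.
set p := normal_peak s.
set kk := s ^+ 2 *+ 2.
have kk0 : 0 < kk by rewrite pmulrn_lgt0 // exprn_gt0.
pose f := fun y : R => p * expR (- (y - c) ^+ 2 / kk) * (y - c).
pose F := fun y : R => - s ^+ 2 * (p * expR (- (y - c) ^+ 2 / kk)).
have fE : forall y, gk s c y * (y - c) = f y by move=> y; rewrite gkE.
have dF : forall y : R, is_derive y 1 F (f y).
  move=> y; apply: is_derive_eq.
  rewrite /f /kk /GRing.scale /=; field; rewrite gt_eqF //.
have df : forall y : R, derivable f y 1.
  move=> y; apply: ex_derive.
have fge : forall y, c <= y -> 0 <= f y.
  move=> y cy; rewrite /f mulr_ge0 ?subr_ge0 // mulr_ge0 ?expR_ge0 //.
  exact: normal_peak_ge0.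
have dFd : forall y : R, derivable F y 1 by move=> y; case: (dF y).
have cF : continuous F.
  by move=> y; apply/differentiable_continuous/derivable1_diffP; exact: dFd.
set r := Num.sqrt kk.
have r0 : 0 < r by rewrite sqrtr_gt0.
have gE : forall x, expR (- (x - c) ^+ 2 / kk) = gauss_fun ((x - c) / r).
  move=> x; rewrite /gauss_fun expr_div_n sqr_sqrtr ?(ltW kk0) // mulNr //.
have Fl : F x @[x --> +oo] --> (0:R).
  have Hd : (x - c) / r @[x --> +oo] --> +oo.
    by apply: gt0_cvgMly; [rewrite invr_gt0|exact: cvg_addrr].
  have G := cvg_comp _ _ Hd (@cvg_gauss_fun R).
  have := @cvgMl_tmp _ _ _ _ _ (- s ^+ 2 * p) _ G.
  rewrite mulr0.
  have -> : F = (fun x => - s ^+ 2 * p * (gauss_fun \o (fun x : R => (x - c) / r)) x).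
    by apply/funext => x; rewrite /F gE /= mulrA.
  by apply.
have -> : (\int[mu]_(y in `[c, +oo[) (gk s c y * (y - c))%:E)%E =
          (\int[mu]_(y in `[c, +oo[) (f y)%:E)%E.
  by apply: eq_integral => y _; rewrite fE.
rewrite (@ge0_continuous_FTC2y R f F c 0) //.
- by rewrite /F subrr expr0n /= oppr0 mul0r expR0 mulr1 -EFinB sub0r mulNr opprK.
- apply: continuous_subspaceT => y.
  exact/differentiable_continuous/derivable1_diffP/df.
- exact/cvg_at_right_filter/cF.
- by move=> y _; rewrite derive1E; exact: derive_val.
Qed.

Lemma gk_sym (s x y : R) : 0 < s -> gk s x (- y) = gk s (- x) y.
Proof.
move=> s0; rewrite !gkE //; have -> : (- y - x) ^+ 2 = (y - - x) ^+ 2 by ring.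
by [].
Qed.

Lemma absle (t : R) : `|t| <= 1 + 1 * t ^+ 2.
Proof.
rewrite mul1r; case: (lerP 0 t) => t0;
  [rewrite ger0_norm //|rewrite ltr0_norm //]; nra.
Qed.

Lemma moment1 (s x : R) : 0 < s ->
  Rintegral mu setT (fun y => gk s x y * (y - x)) = 0.
Proof.
move=> s0.
set h := fun y => gk s x y * (y - x).
set g := fun y => gk s x y * (x - y).
have mT : measurable (setT : set R) by [].
have ih : mu.-integrable setT (EFin \o h).
  apply: (@int_dom R s x 1 1) => //.
    apply: measurable_funB => //.
  by move=> y; exact: absle.
have ig : mu.-integrable setT (EFin \o g).
  apply: (@int_dom R s x 1 1) => //.
    apply: measurable_funB => //.
  by move=> y; rewrite distrC; exact: absle.
have TE : (setT : set R) = `[x, +oo[ `|` `]-oo, x[.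
  apply/seteqP; split => y //= _; rewrite !in_itv /= andbT.
  by case: (leP x y) => _; [left|right].
have dj : [disjoint `[x, +oo[ & `]-oo, x[].
  rewrite disj_set2E; apply/eqP/seteqP; split => y //= [].
  by rewrite !in_itv /= andbT => xy yx; move: (le_lt_trans xy yx); rewrite ltxx.
rewrite TE Rintegral_setU //; last by rewrite -TE.
have -> : Rintegral mu `[x, +oo[ h = s ^+ 2 * normal_peak s.
  by rewrite /Rintegral half_moment.
rewrite Rintegral_itv_bndo_bndc; last first.
  by apply: integrableS ih => //.
have -> : Rintegral mu `]-oo, x] h = - 1 * Rintegral mu `]-oo, x] g.
  rewrite -RintegralZl //; last by apply: integrableS ig => //.
  by apply: eq_Rintegral => y _; rewrite /h /g; ring.
have -> : Rintegral mu `]-oo, x] g = s ^+ 2 * normal_peak s.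
  have SB := @ge0_integration_by_substitutionNy R g (- x); rewrite opprK in SB.
  rewrite /Rintegral SB.
  - have -> : (\int[mu]_(y in `[(- x)%R, +oo[) ((g \o -%R) y)%:E)%E =
          (\int[mu]_(y in `[(- x)%R, +oo[) ((gk s (- x) y * (y - - x))%R%:E))%E.
      apply: eq_integral => y _; rewrite /g /= gk_sym //; congr (_ * _)%:E; ring.
    by rewrite half_moment.
  - apply: continuous_subspaceT => y; rewrite /g.
    apply: continuousM; first by have := @continuous_normal_pdf R x s (lt0r_neq0 s0) y.
    by apply: cvgB; [exact: cvg_cst|exact: cvg_id].
  - move=> y; rewrite in_itv /= => yx.
    by rewrite /g mulr_ge0 ?gk_ge0 // subr_ge0 ltW.
ring.
Qed.

End Half.



Section Key.
Context {R : realType}.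
Local Notation mu := (@lebesgue_measure R).

Lemma kint_close (w : R -> R) (B M s x : R) : 0 < s ->
  continuous w -> (forall y, `|w y| <= B) ->
  (forall x, derivable w x 1) ->
  (forall x, derivable (derive1 w) x 1) ->
  (forall x, `|derive1n 2 w x| < M) ->
  `|kint w s x - w x| <= 16 * M * s ^+ 2.
Proof.
move=> s0 cw wB dw dw' bM.
have M0 : 0 <= M by apply: le_trans (ltW (bM 0)).
have mT : measurable (setT : set R) by [].
have mw : measurable_fun setT w by exact: continuous_measurable_fun.
set d := derive1 w x.
set g := fun y => w y - w x - d * (y - x).
have gb : forall y, `|g y| <= M * (y - x) ^+ 2 by move=> y; exact: taylor2.
have mg : measurable_fun setT g.
  apply: measurable_funB; first exact: measurable_funB.
  by apply: measurable_funM => //; exact: measurable_funB.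
have iw : mu.-integrable setT (EFin \o (fun y => gk s x y * w y)).
  by apply: (@int_dom R s x B 0) => // y; rewrite mul0r addr0.
have iwx : mu.-integrable setT (EFin \o (fun y => gk s x y * w x)).
  by apply: (@int_dom R s x `|w x| 0) => // y; rewrite mul0r addr0.
have ig : mu.-integrable setT (EFin \o (fun y => gk s x y * g y)).
  by apply: (@int_dom R s x 0 M) => // y; rewrite add0r.
have ig' : mu.-integrable setT (EFin \o (fun y => gk s x y * `|g y|)).
  apply: (@int_dom R s x 0 M) => //; first exact: measurableT_comp.
  by move=> y; rewrite add0r normr_id.
have i1 : mu.-integrable setT (EFin \o (fun y => gk s x y * (y - x))).
  apply: (@int_dom R s x 1 1) => //; first exact: measurable_funB.
  by move=> y; exact: absle.
have i2 : mu.-integrable setT (EFin \o (fun y => 16 * M * s ^+ 2 * gk (2 * s) x y)).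
  apply: (eq_integrable _ _ _ _ (integrableZl _ (16 * M * s ^+ 2) (gk_integrable (2 * s) x))) => //.
have E1 : kint w s x - w x = Rintegral mu setT (fun y => gk s x y * g y) +
    d * Rintegral mu setT (fun y => gk s x y * (y - x)).
  rewrite -RintegralZl // -RintegralD //; last first.
    apply: (eq_integrable _ _ _ _ (integrableZl _ d i1)) => //.
  have -> : w x = Rintegral mu setT (fun y => gk s x y * w x).
    by rewrite (RintegralZr _ _ (gk_integrable s x)) // gk_int1 mul1r.
  rewrite /kint -RintegralB //; apply: eq_Rintegral => y _; rewrite /g; ring.
rewrite E1 moment1 // mulr0 addr0.
apply: le_trans (le_normr_Rintegral _ ig) _ => //.
have -> : 16 * M * s ^+ 2 = Rintegral mu setT (fun y => 16 * M * s ^+ 2 * gk (2 * s) x y).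
  by rewrite RintegralZl ?gk_int1 ?mulr1 //; exact: gk_integrable.
apply: le_Rintegral => //.
  apply: (eq_integrable _ _ _ _ ig') => //.
  by move=> y _; rewrite /= normrM (ger0_norm (gk_ge0 _ _ _)).
move=> y _; rewrite normrM (ger0_norm (gk_ge0 _ _ _)).
apply: le_trans (ler_wpM2l (gk_ge0 s x y) (gb y)) _.
have := moment2_pt s x y s0.
move: (gk s x y) (gk (2 * s) x y) ((y - x) ^+ 2) => a b t H.
have := ler_wpM2l M0 H; nra.
Qed.

End Key.



Section Meas.
Context {R : realType}.
Local Notation mu := (@lebesgue_measure R).

Lemma kint_meas (w : R -> R) (s : R) : 0 < s -> continuous w ->
  (forall y, 0 <= w y) -> measurable_fun setT (kint w s).
Proof.
move=> s0 cw w0.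
have mw : measurable_fun setT w by exact: continuous_measurable_fun.
pose f := fun p : R * R => ((gk s 0 (p.2 - p.1) * w p.2)%:E : \bar R).
have mf : measurable_fun setT f.
  apply/measurable_EFinP; apply: measurable_funM.
    apply: measurableT_comp; first exact: gk_meas.
    by apply: measurable_funB; [exact: measurable_snd|exact: measurable_fst].
  exact: measurableT_comp mw measurable_snd.
have f0 : forall p, (0 <= f p)%E.
  by move=> p; rewrite lee_fin mulr_ge0 // gk_ge0.
have := @measurable_fun_fubini_tonelli_F _ _ R _ R mu f mf f0.
move=> /(measurableT_comp (@fine_measurable R setT measurableT)).
apply: eq_measurable_fun => z _.
rewrite /kint /Rintegral /fubini_F /=; congr fine; apply: eq_integral => y _.
by rewrite /f /= !gkE // subr0.
Qed.

End Meas.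



Section Fin.
Context {R : realType}.
Local Notation mu := (@lebesgue_measure R).

Lemma avg_abs (s x c : R) (h : R -> R) : 0 < s -> measurable_fun setT h ->
  (forall y, `|h y| <= c) ->
  `|Rintegral mu setT (fun y => gk s x y * h y)| <= c.
Proof.
move=> s0 mh hc.
have mT : measurable (setT : set R) by [].
have ih : mu.-integrable setT (EFin \o (fun y => gk s x y * h y)).
  by apply: (@int_dom R s x c 0) => // y; rewrite mul0r addr0.
have ih' : mu.-integrable setT (EFin \o (fun y => gk s x y * `|h y|)).
  apply: (@int_dom R s x c 0) => //; first exact: measurableT_comp.
  by move=> y; rewrite mul0r addr0 normr_id.
have ic : mu.-integrable setT (EFin \o (fun y => gk s x y * c)).
  by apply: (@int_dom R s x `|c| 0) => // y; rewrite mul0r addr0.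
apply: le_trans (le_normr_Rintegral _ ih) _ => //.
have -> : c = Rintegral mu setT (fun y => gk s x y * c).
  by rewrite (RintegralZr _ _ (gk_integrable s x)) // gk_int1 mul1r.
apply: le_Rintegral => //.
  apply: (eq_integrable _ _ _ _ ih') => //.
  by move=> y _; rewrite /= normrM (ger0_norm (gk_ge0 _ _ _)).
move=> y _; rewrite normrM (ger0_norm (gk_ge0 _ _ _)).
by rewrite ler_wpM2l ?gk_ge0 ?hc.
Qed.

Lemma avg_ge (s x c B : R) (h : R -> R) : 0 < s -> measurable_fun setT h ->
  (forall y, `|h y| <= B) -> (forall y, c <= h y) ->
  c <= Rintegral mu setT (fun y => gk s x y * h y).
Proof.
move=> s0 mh hB hc.
have mT : measurable (setT : set R) by [].
have ih : mu.-integrable setT (EFin \o (fun y => gk s x y * h y)).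
  by apply: (@int_dom R s x B 0) => // y; rewrite mul0r addr0.
have ic : mu.-integrable setT (EFin \o (fun y => gk s x y * c)).
  by apply: (@int_dom R s x `|c| 0) => // y; rewrite mul0r addr0.
have -> : c = Rintegral mu setT (fun y => gk s x y * c).
  by rewrite (RintegralZr _ _ (gk_integrable s x)) // gk_int1 mul1r.
apply: le_Rintegral => // y _.
by rewrite ler_wpM2l ?gk_ge0 ?hc.
Qed.

Lemma ratio_bound (a b e L : R) : 0 < L -> L <= a -> `|b - a| <= e ->
  `|b / a - 1| <= e / L.
Proof.
move=> L0 La ba.
have a0 : 0 < a by apply: lt_le_trans La.
have qE : (b / a - 1) * a = b - a by field; rewrite gt_eqF.
rewrite ler_pdivlMr //.
apply: le_trans ba; rewrite -qE normrM (gtr0_norm a0).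
by apply: ler_wpM2l.
Qed.

End Fin.



Theorem lemma2 (R : realType) (omega L U M : R) (w : R -> R) :
  0 < omega ->
  continuous w ->
  0 < L ->
  (forall x, L <= w x <= U) ->
  (forall x, derivable w x 1) ->
  (forall x, derivable (derive1 w) x 1) ->
  (forall x, `|derive1n 2 w x| < M) ->
  exists C : R, 0 < C /\
    forall x1 x2 tau : R, 0 < tau -> tau < 2 * L / (M * omega ^+ 2) ->
      `|vfun w (omega * Num.sqrt tau) x1 x2 - 1| <= C * tau.
Proof.
move=> om0 cw L0 wLU dw dw' bM.
have M0 : 0 < M by apply: le_lt_trans (bM 0).
have LU : L <= U by case/andP: (wLU 0) => ? ?; apply: le_trans; eauto.
have U0 : 0 < U by apply: lt_le_trans LU.
have wB : forall y, `|w y| <= U.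
  move=> y; case/andP: (wLU y) => a b; rewrite ger0_norm //.
  by apply: le_trans (ltW L0) a.
have w0 : forall y, 0 <= w y.
  by move=> y; case/andP: (wLU y) => a _; apply: le_trans (ltW L0) a.
have mw : measurable_fun setT w by exact: continuous_measurable_fun.
set K := M * (48 * U / L ^+ 2 + 16 / L).
have K0 : 0 <= K.
  apply: mulr_ge0; first exact: ltW.
  apply: addr_ge0; apply: divr_ge0; rewrite ?mulr_ge0 ?exprn_ge0 ?ltW //.
exists (omega ^+ 2 * K + 1); split.
  have : 0 <= omega ^+ 2 * K by rewrite mulr_ge0 // exprn_ge0 // ltW.
  lra.
move=> x1 x2 tau t0 _.
set s := omega * Num.sqrt tau.
have s0 : 0 < s by rewrite mulr_gt0 // sqrtr_gt0.
have s2 : s ^+ 2 = omega ^+ 2 * tau by rewrite exprMn sqr_sqrtr // ltW.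
set A := kint w s.
have AL : forall z, L <= A z.
  move=> z; apply: (@avg_ge R s z L U w) => // y.
  by case/andP: (wLU y).
have Aclose : forall z, `|A z - w z| <= 16 * M * s ^+ 2.
  by move=> z; apply: (@kint_close R w U M s z).
have r2 : 0 < Num.sqrt 2 :> R by rewrite sqrtr_gt0.
have Bclose : `|kint w (Num.sqrt 2 * s) x2 - w x2| <= 32 * M * s ^+ 2.
  have := @kint_close R w U M (Num.sqrt 2 * s) x2 (mulr_gt0 r2 s0) cw wB dw dw' bM.
  by rewrite exprMn sqr_sqrtr //; lra.
have BA : `|kint w (Num.sqrt 2 * s) x2 - A x2| <= 48 * M * s ^+ 2.
  have -> : kint w (Num.sqrt 2 * s) x2 - A x2 =
    (kint w (Num.sqrt 2 * s) x2 - w x2) - (A x2 - w x2) by ring.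
  apply: le_trans (ler_normB _ _) _.
  have := Aclose x2; lra.
have r1b := @ratio_bound R _ _ _ _ L0 (AL x2) BA.
set h := fun z => w z / A z.
have mA : measurable_fun setT A by apply: kint_meas.
have mh : measurable_fun setT h.
  suff : measurable_fun setT (w \* (expR \o (-%R \o (@ln R \o A)))).
    apply: eq_measurable_fun => z _.
    rewrite /h /= expRN lnK // posrE; apply: lt_le_trans (AL z); exact: L0.
  apply: measurable_funM => //.
  apply: measurableT_comp; first exact: measurable_expR.
  apply: measurableT_comp => //; apply: measurableT_comp => //.
have hb : forall z, `|h z| <= U / L.
  move=> z; rewrite /h normrM normrV ?unitfE ?gt_eqF //; last first.
    by apply: lt_le_trans (AL z).
  rewrite (ger0_norm (w0 z)) (gtr0_norm (lt_le_trans L0 (AL z))).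
  have a0 : 0 < A z by apply: lt_le_trans (AL z).
  case/andP: (wLU z) => _ wU.
  rewrite ler_pdivrMr //; apply: le_trans wU _.
  rewrite mulrAC ler_pdivlMr // ler_wpM2l ?AL //; exact: ltW.
have h1 : forall z, `|h z - 1| <= 16 * M * s ^+ 2 / L.
  move=> z; apply: (@ratio_bound R (A z) (w z) _ L L0 (AL z)).
  by rewrite distrC.
set m := (x1 + x2) / 2.
set s' := s / Num.sqrt 2.
have s'0 : 0 < s' by rewrite divr_gt0.
set I := Rintegral (@lebesgue_measure R) setT (fun z => gk s' m z * h z).
have Ib : `|I| <= U / L by apply: avg_abs.
have mT : measurable (setT : set R) by [].
have I1 : `|I - 1| <= 16 * M * s ^+ 2 / L.
  have -> : I - 1 = Rintegral (@lebesgue_measure R) setT (fun z => gk s' m z * (h z - 1)).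
    transitivity (Rintegral (@lebesgue_measure R) setT (fun z => gk s' m z * h z - gk s' m z * 1)); last first.
      by apply: eq_Rintegral => z _; ring.
    rewrite RintegralB //.
    - by rewrite (RintegralZr _ _ (gk_integrable s' m)) // gk_int1 mul1r.
    - by apply: (@int_dom R s' m (U / L) 0) => // y; rewrite mul0r addr0.
    - by apply: (@int_dom R s' m 1 0) => // y; rewrite mul0r addr0 normr1.
  apply: avg_abs => //.
  by apply: measurable_funB.
have vE : vfun w s x1 x2 = (kint w (Num.sqrt 2 * s) x2 / A x2) * I by [].
rewrite vE.
set r := kint w (Num.sqrt 2 * s) x2 / A x2.
have -> : r * I - 1 = (r - 1) * I + (I - 1) by ring.
apply: le_trans (ler_normD _ _) _.
rewrite normrM.
have P1 : `|r - 1| * `|I| <= 48 * M * s ^+ 2 / L * (U / L).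
  by apply: ler_pM.
have E : 48 * M * s ^+ 2 / L * (U / L) + 16 * M * s ^+ 2 / L = omega ^+ 2 * K * tau.
  by rewrite s2 /K; field; rewrite gt_eqF.
have : 0 < tau by [].
lra.
Qed.
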